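(* Let $q$ be odd, $V$ an $n$-dimensional space over $\mathbb{F}_q$, $n\ge4$, with a non-degenerate alternating form ($G=\mathrm{Sp}(V)$, $q_0=q$) or a non-degenerate hermitian form ($G=\mathrm{SU}(V)$, $q=q_0^2$). Let $\mathcal T$ be the set of transvections of $G$ and $X\subseteq\mathcal T$ a generating set of $G$ such that ${}_VX$ spans $V$, $X_{V^*}$ spans $V^*$, $\Gamma(X)$ is strongly connected, the weights of all cycles of $\Gamma(X)$ generate $\mathbb{F}_q$, the directed diameter of $\Gamma(X'')$ is at most $2$ and its two-way diameter is at most $6$ for every $X\subseteq X''\subseteq\mathcal T$. If $L_3(X)=\mathbb{F}_q$ and $|\mathbb{F}_q:L_2(X)|\le2$, then $L_2(X^{(3)})=\mathbb{F}_q$ in the symplectic case and $L_2(X)=\mathbb{F}_{q_0}$ in the unitary case.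
   Context: Transvections $s=1+u_s\otimes\phi_s$ ($x\mapsto x+\phi_s(x)u_s$). $\Gamma(Y)$: directed graph on $Y$ with edge $[s,t]$ iff $\phi_t(u_s)\ne0$ (two-way if both directions are edges). Weight of $(r_1,\dots,r_k)$: $\prod_{i=1}^k\phi_{r_{i+1}}(u_{r_i})$ (indices mod $k$); a cycle is a tuple with nonzero weight. $L_k(Y)$: subfield generated by the weights of the cycles of $\Gamma(Y)$ of length at most $k$. $Y^{(k)}$: the set of transvections which can be written as a product of at most $k$ elements of $Y\cup Y^{-1}$. ${}_VX$, $X_{V^*}$: the sets of $u_s$, resp. $\phi_s$, $s\in X$. *)

(* Defs.v *)
From HB Require Import structures.
From mathcomp Require Import all_boot all_order all_algebra.
From mathcomp Require Import boolp.
Set Implicit Arguments. Unset Strict Implicit. Unset Printing Implicit Defensive.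
Import GRing.Theory.
Local Open Scope ring_scope.

Section Transvections.
Variables (F : finFieldType) (n : nat).
Local Notation M := 'M[F]_n.

Definition pv (u : 'rV[F]_n) (f : 'cV[F]_n) : F := (u *m f) ord0 ord0.

(* s is a transvection: s = 1 + u (x) phi, i.e. x |-> x + phi(x) u, u,phi nonzero, phi(u) = 0.
   Linear maps act on row vectors: x |-> x *m s. *)
Definition tv_data (s : M) (p : 'rV[F]_n * 'cV[F]_n) : bool :=
  [&& p.1 != 0, p.2 != 0, pv p.1 p.2 == 0 & s == 1%:M + p.2 *m p.1].

Definition is_transvection (s : M) : bool := [exists p, tv_data s p].

Definition tv_u (s : M) : 'rV[F]_n :=
  if [pick p | tv_data s p] is Some p then p.1 else 0.
Definition tv_f (s : M) : 'cV[F]_n :=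
  if [pick p | tv_data s p] is Some p then p.2 else 0.

Definition edge (s t : M) : bool := pv (tv_u s) (tv_f t) != 0.
Definition twoway (s t : M) : bool := edge s t && edge t s.

Definition cweight k (r : k.-tuple M) : F :=
  \prod_(i < k) pv (tv_u (tnth r i)) (tv_f (tnth r (ordS i))).

Definition is_cycle_weight (Y : {set M}) (k : nat) (w : F) : Prop :=
  exists r : k.-tuple M,
    [/\ (0 < k)%N, all (mem Y) r, cweight r != 0 & w = cweight r].

Definition subfield_closed (K : {set F}) : bool :=
  [&& 0 \in K, 1 \in K,
      [forall x in K, forall y in K, (x + y \in K) && (x * y \in K)],
      [forall x in K, - x \in K] & [forall x in K, x^-1 \in K]].
Definition gen_subfield (S : {set F}) : {set F} :=
  \bigcap_(K : {set F} | subfield_closed K && (S \subset K)) K.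

Definition Lk (k : nat) (Y : {set M}) : {set F} :=
  gen_subfield [set w | `[< exists m, (m <= k)%N /\ is_cycle_weight Y m w >]].
Definition Lall (Y : {set M}) : {set F} :=
  gen_subfield [set w | `[< exists m, is_cycle_weight Y m w >]].

Definition index_le2 (L : {set F}) : Prop :=
  exists d, (d <= 2)%N /\ #|[set: F]| = (#|L| ^ d)%N.

Definition inv_set (Y : {set M}) : {set M} := [set invmx y | y in Y].

Definition prod_of (Y : {set M}) (s : seq M) (g : M) : Prop :=
  all (fun x => (x \in Y) || (x \in inv_set Y)) s /\ g = foldr mulmx 1%:M s.

Definition Xk (k : nat) (Y : {set M}) : {set M} :=
  [set g | is_transvection g && `[< exists s, (size s <= k)%N /\ prod_of Y s g >]].

Definition generates (Y G : {set M}) : Prop :=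
  forall g, g \in G <-> exists s, prod_of Y s g.

Definition reach (e : rel M) (Y : {set M}) (d : option nat) (s t : M) : Prop :=
  exists p : seq M, [/\ all (mem Y) p, path e s p, last s p = t &
                        if d is Some d' then (size p <= d')%N else True].
Definition strongly_connected (Y : {set M}) : Prop :=
  forall s t, s \in Y -> t \in Y -> reach edge Y None s t.
Definition dir_diam_le (Y : {set M}) (d : nat) : Prop :=
  forall s t, s \in Y -> t \in Y -> reach edge Y (Some d) s t.
Definition twoway_diam_le (Y : {set M}) (d : nat) : Prop :=
  forall s t, s \in Y -> t \in Y -> reach twoway Y (Some d) s t.

Definition transv_of (G : {set M}) : {set M} := [set g in G | is_transvection g].

Definition u_span (Y : {set M}) : bool := row_full (\sum_(s in Y) <<tv_u s>>)%MS.
Definition f_span (Y : {set M}) : bool := row_full (\sum_(s in Y) <<(tv_f s)^T>>)%MS.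

Definition lemma_hyps (G X : {set M}) : Prop :=
  [/\ X \subset transv_of G, generates X G, u_span X && f_span X,
      strongly_connected X /\ Lall X = [set: F] &
      forall X2 : {set M}, X \subset X2 -> X2 \subset transv_of G ->
        dir_diam_le X2 2 /\ twoway_diam_le X2 6].

(* Sp(V) for alternating non-degenerate B: (x,y) = x B y^T *)
Definition is_alternating (B : M) : bool :=
  (B^T == - B) && [forall i, B i i == 0].
Definition Sp_set (B : M) : {set M} := [set g | g *m B *m g^T == B].

(* SU(V) for hermitian H w.r.t. sigma = (x |-> x^q0): h(x,y) = x H (sigma y)^T *)
Definition frobq (q0 : nat) (x : F) : F := x ^+ q0.
Definition is_hermitian (q0 : nat) (H : M) : bool := H^T == map_mx (frobq q0) H.
Definition SU_set (q0 : nat) (H : M) : {set M} :=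
  [set g | (g *m H *m (map_mx (frobq q0) g)^T == H) && (\det g == 1)].

End Transvections.

(* Main.v *)
Require Import Defs.
From HB Require Import structures.
From mathcomp Require Import all_boot all_order all_algebra.
From mathcomp Require Import finfield.
From mathcomp Require Import boolp.
From mathcomp Require Import ring.
Set Implicit Arguments. Unset Strict Implicit. Unset Printing Implicit Defensive.
Import GRing.Theory.
Local Open Scope ring_scope.



Section FieldFacts.
Variable F : finFieldType.

Lemma two_neq0 : odd #|[set: F]| -> (2%:R : F) != 0.
Proof.
rewrite cardsT => oddF; apply/negP => /eqP h2.
have ch2 : (2%N \in [pchar F]) by rewrite inE /= h2 eqxx.
move: oddF; rewrite (card_pprimeChar ch2) oddX /=.
case: (logn _ _) (card_pprimeChar ch2) => [|k] //= h1.
have : (1 < #|F|)%N.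
  by rewrite (cardD1 0) (cardD1 1) !inE oner_eq0.
rewrite [#|F|]h1 //.
Qed.

Lemma frob_additive (q0 : nat) : #|[set: F]| = (q0 ^ 2)%N ->
  forall x y : F, (x + y) ^+ q0 = x ^+ q0 + y ^+ q0.
Proof.
rewrite cardsT => hq x y.
have [p pr chp] := finPcharP F.
apply: exprDn_pchar.
have hp : p.-nat #|F|.
  rewrite [#|F|](card_pprimeChar chp) pnatX pnat_id //.
have : p.-nat q0.
  apply: pnat_dvd hp; rewrite hq expnS dvdn_mulr //.
by rewrite (eq_pnat q0 (pcharf_eq chp)).
Qed.
End FieldFacts.



Section Sub.
Variable F : finFieldType.
Implicit Types K L S : {set F}.

Lemma sf0 K : subfield_closed K -> 0 \in K.
Proof. by case/and5P. Qed.
Lemma sf1 K : subfield_closed K -> 1 \in K.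
Proof. by case/and5P. Qed.
Lemma sfA K : subfield_closed K -> forall x y, x \in K -> y \in K -> x + y \in K.
Proof. by case/and5P=> _ _ /forallP hAM _ _ x y xK yK; move: (hAM x); rewrite xK => /forallP/(_ y); rewrite yK => /andP[]. Qed.
Lemma sfM K : subfield_closed K -> forall x y, x \in K -> y \in K -> x * y \in K.
Proof. by case/and5P=> _ _ /forallP hAM _ _ x y xK yK; move: (hAM x); rewrite xK => /forallP/(_ y); rewrite yK => /andP[]. Qed.
Lemma sfN K : subfield_closed K -> forall x, x \in K -> - x \in K.
Proof. by case/and5P=> _ _ _ /forallP hN _ x xK; move: (hN x); rewrite xK. Qed.
Lemma sfV K : subfield_closed K -> forall x, x \in K -> x^-1 \in K.
Proof. by case/and5P=> _ _ _ _ /forallP hN x xK; move: (hN x); rewrite xK. Qed.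

Lemma sfI K : 0 \in K -> 1 \in K -> (forall x y, x \in K -> y \in K -> x + y \in K) ->
      (forall x y, x \in K -> y \in K -> x * y \in K) ->
      (forall x, x \in K -> - x \in K) -> (forall x, x \in K -> x^-1 \in K) ->
  subfield_closed K.
Proof.
move=> h0 h1 hA hM hN hV; apply/and5P; split=> //.
- by apply/forallP=> x; apply/implyP=> xK; apply/forallP=> y; apply/implyP=> yK; rewrite hA ?hM.
- by apply/forallP=> x; apply/implyP; apply: hN.
- by apply/forallP=> x; apply/implyP; apply: hV.
Qed.

Lemma gen_sub S : S \subset gen_subfield S.
Proof. by apply/bigcapsP=> K /andP[]. Qed.

Lemma gen_min S K : subfield_closed K -> S \subset K -> gen_subfield S \subset K.
Proof. by move=> h1 h2; apply: bigcap_inf; rewrite h1 h2. Qed.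

Lemma gen_mono S S' : S \subset S' -> gen_subfield S \subset gen_subfield S'.
Proof.
move=> h; apply/bigcapsP=> K /andP[h1 h2]; apply: bigcap_inf; rewrite h1 /=.
exact: subset_trans h h2.
Qed.

Lemma gen_closed S : subfield_closed (gen_subfield S).
Proof.
have hP : forall x, reflect (forall K, subfield_closed K && (S \subset K) -> x \in K)
   (x \in gen_subfield S) by move=> x; apply: bigcapP.
apply: sfI.
- by apply/hP=> K /andP[/sf0].
- by apply/hP=> K /andP[/sf1].
- by move=> x y /hP hx /hP hy; apply/hP=> K hK; case/andP: (hK) => /sfA hA _; apply: hA; [apply: hx|apply: hy].
- by move=> x y /hP hx /hP hy; apply/hP=> K hK; case/andP: (hK) => /sfM hM _; apply: hM; [apply: hx|apply: hy].
- by move=> x /hP hx; apply/hP=> K hK; case/andP: (hK) => /sfN hN _; apply: hN; apply: hx.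
- by move=> x /hP hx; apply/hP=> K hK; case/andP: (hK) => /sfV hV _; apply: hV; apply: hx.
Qed.

Lemma index2_full K L x : subfield_closed K -> subfield_closed L -> K \subset L ->
  x \in L -> x \notin K -> #|[set: F]| = (#|K| ^ 2)%N -> L = [set: F].
Proof.
move=> hK hL KL xL xK hc.
have KA := sfA hK; have KM := sfM hK; have KN := sfN hK; have KV := sfV hK.
have LA := sfA hL; have LM := sfM hL.
pose f (k : F * F) := k.1 + k.2 * x.
have inj : {in setX K K &, injective f}.
  move=> [a1 a2] [b1 b2]; rewrite !inE /= => /andP[a1K a2K] /andP[b1K b2K].
  rewrite /f /= => e.
  have [e2|ne2] := eqVneq a2 b2.
    by move: e; rewrite e2 => /addIr ->.
  exfalso; move/negP: xK; apply.
  have -> : x = (b1 - a1) / (a2 - b2).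
    have nz : a2 - b2 != 0 by rewrite subr_eq0.
    apply: (mulIf nz); rewrite divfK //.
    apply/eqP; rewrite -subr_eq0; apply/eqP.
    transitivity ((a1 + a2 * x) - (b1 + b2 * x)); first by ring.
    by rewrite e subrr.
  by apply: KM; [apply: KA => //; apply: KN|apply: KV; apply: KA => //; apply: KN].
have sub : f @: setX K K \subset L.
  apply/subsetP=> y /imsetP[[a b]]; rewrite inE /= => /andP[aK bK] ->.
  by rewrite /f /=; apply: LA; [apply: (subsetP KL)|apply: LM => //; apply: (subsetP KL)].
apply/eqP; rewrite eqEcard subsetT /= hc.
have := subset_leq_card sub; rewrite card_in_imset // cardsX expnS expn1.
by [].
Qed.
End Sub.



Section Mx.
Variables (F : finFieldType) (n : nat).
Local Notation M := 'M[F]_n.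
Implicit Types (u : 'rV[F]_n) (f : 'cV[F]_n).

Lemma tvP (s : M) : is_transvection s ->
  [/\ tv_u s != 0, tv_f s != 0, pv (tv_u s) (tv_f s) = 0 & s = 1%:M + tv_f s *m tv_u s].
Proof.
case/existsP=> p0 hp0; rewrite /tv_u /tv_f; case: pickP => [p|h]; last by rewrite h in hp0.
by case/and4P=> h1 h2 /eqP h3 /eqP h4.
Qed.

Lemma pv_tr u f : pv u f = \tr (f *m u).
Proof. by rewrite mxtrace_mulC /mxtrace big_ord1. Qed.

Lemma rank1M f u f' u' : (f *m u) *m (f' *m u') = pv u f' *: (f *m u').
Proof.
by rewrite mulmxA -(mulmxA f u f') [u *m f']mx11_scalar mul_mx_scalar scalemxAl.
Qed.

Lemma w2 u1 f1 u2 f2 : pv u1 f2 * pv u2 f1 = \tr ((f1 *m u1) *m (f2 *m u2)).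
Proof. by rewrite rank1M mxtraceZ -pv_tr. Qed.

Lemma w3 u1 f1 u2 f2 u3 f3 : pv u1 f2 * pv u2 f3 * pv u3 f1 =
  \tr ((f1 *m u1) *m (f2 *m u2) *m (f3 *m u3)).
Proof. by rewrite rank1M -scalemxAl rank1M scalerA mxtraceZ -pv_tr. Qed.

Lemma pvMl u (A : M) f : pv (u *m A) f = pv u (A *m f).
Proof. by rewrite /pv mulmxA. Qed.

Lemma pvDr u f g : pv u (f + g) = pv u f + pv u g.
Proof. by rewrite /pv mulmxDr mxE. Qed.
Lemma pvDl u v f : pv (u + v) f = pv u f + pv v f.
Proof. by rewrite /pv mulmxDl mxE. Qed.
Lemma pvNr u f : pv u (- f) = - pv u f.
Proof. by rewrite /pv mulmxN mxE. Qed.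
Lemma pvR u f (g : 'cV[F]_n) (v : 'rV[F]_n) : pv u ((f *m v) *m g) = pv u f * pv v g.
Proof. rewrite /pv !mulmxA [u *m f]mx11_scalar mul_scalar_mx -scalemxAl mxE; congr (_ * _); rewrite [RHS]mxE eqxx mulr1n; exact: erefl. Qed.

Lemma cweight1 (r : 1.-tuple M) : cweight r = pv (tv_u (tnth r ord0)) (tv_f (tnth r ord0)).
Proof. by rewrite /cweight big_ord1; congr pv; congr tv_f; congr tnth; apply: val_inj. Qed.

Lemma cweight2 (r : 2.-tuple M) : cweight r =
  pv (tv_u (tnth r ord0)) (tv_f (tnth r (inord 1))) *
  pv (tv_u (tnth r (inord 1))) (tv_f (tnth r ord0)).
Proof.
rewrite /cweight big_ord_recl big_ord1.
have e3 : ordS (lift ord0 (ord0 : 'I_1)) = ord0 :> 'I_2 by apply: val_inj.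
have e1 : ordS (ord0 : 'I_2) = inord 1 by apply: val_inj; rewrite /= inordK.
have e2 : lift ord0 (ord0 : 'I_1) = inord 1 :> 'I_2 by apply: val_inj; rewrite /= inordK.
by rewrite e3 e1 e2.
Qed.

Lemma cweight3 (r : 3.-tuple M) : cweight r =
  pv (tv_u (tnth r ord0)) (tv_f (tnth r (inord 1))) *
  pv (tv_u (tnth r (inord 1))) (tv_f (tnth r (inord 2))) *
  pv (tv_u (tnth r (inord 2))) (tv_f (tnth r ord0)).
Proof.
rewrite /cweight big_ord_recl big_ord_recl big_ord1 mulrA.
have e5 : ordS (lift ord0 (lift ord0 (ord0 : 'I_1))) = ord0 :> 'I_3 by apply: val_inj.
have e4 : ordS (lift ord0 (ord0 : 'I_2)) = inord 2 :> 'I_3 by apply: val_inj; rewrite /= inordK.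
have e3 : lift ord0 (lift ord0 (ord0 : 'I_1)) = inord 2 :> 'I_3 by apply: val_inj; rewrite /= inordK.
have e1 : ordS (ord0 : 'I_3) = inord 1 by apply: val_inj; rewrite /= inordK.
have e2 : lift ord0 (ord0 : 'I_2) = inord 1 :> 'I_3 by apply: val_inj; rewrite /= inordK.
by rewrite e5 e4 e3 e1 e2.
Qed.

Section Sig.
Variable s : F -> F.
Hypotheses (s0 : s 0 = 0) (s1 : s 1 = 1) (sD : forall x y, s (x + y) = s x + s y)
  (sM : forall x y, s (x * y) = s x * s y).

Lemma sN x : s (- x) = - s x.
Proof. by apply/eqP; rewrite -subr_eq0 opprK -sD addNr s0. Qed.

Lemma s_sum (I : finType) (G : I -> F) : s (\sum_i G i) = \sum_i s (G i).
Proof. exact: (big_morph s sD s0). Qed.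

Lemma map_mulmx m k p (A : 'M[F]_(m, k)) (B : 'M[F]_(k, p)) :
  map_mx s (A *m B) = map_mx s A *m map_mx s B.
Proof.
apply/matrixP=> i j; rewrite !mxE s_sum; apply: eq_bigr => l _.
by rewrite sM !mxE.
Qed.

Lemma map_tr (A : M) : s (\tr A) = \tr (map_mx s A).
Proof. by rewrite /mxtrace s_sum; apply: eq_bigr => i _; rewrite mxE. Qed.

Lemma map_1P (P : M) : map_mx s (1%:M + P) = 1%:M + map_mx s P.
Proof.
apply/matrixP=> i j; rewrite !mxE sD; congr (_ + _).
by case: (i == j); rewrite /= ?mulr1n ?mulr0n.
Qed.

Lemma adj_rel (B P : M) : B \in unitmx -> P *m P = 0 ->
  (1%:M + P) *m B *m (map_mx s (1%:M + P))^T = B ->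
  (map_mx s P)^T = - (invmx B *m P *m B).
Proof.
move=> Bu PP hr.
have hinv : (1%:M - P) *m (1%:M + P) = 1%:M.
  by rewrite mulmxBl mul1mx mulmxDr mulmx1 PP addr0 addrK.
have h1 : B *m (map_mx s (1%:M + P))^T = (1%:M - P) *m B.
  by rewrite -{2}hr !mulmxA hinv mul1mx.
have h2 : (map_mx s (1%:M + P))^T = invmx B *m (1%:M - P) *m B.
  by rewrite -mulmxA -h1 mulmxA mulVmx // mul1mx.
move: h2; rewrite map_1P raddfD /= trmx1 mulmxBr mulmx1 mulmxBl mulVmx //.
by move/addrI.
Qed.
End Sig.

End Mx.



Section Tr.
Variables (F : finFieldType) (n : nat).
Local Notation M := 'M[F]_n.
Variables (B : M) (Bu : B \in unitmx).
Local Notation Bi := (invmx B).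

Lemma conjM (X Y : M) : (Bi *m X *m B) *m (Bi *m Y *m B) = Bi *m (X *m Y) *m B.
Proof. by rewrite !mulmxA -[Bi *m X *m B *m Bi]mulmxA mulmxV // mulmx1. Qed.

Lemma tr_conj (X : M) : \tr (Bi *m X *m B) = \tr X.
Proof. by rewrite mxtrace_mulC mulmxA mulmxV // mul1mx. Qed.

Lemma tr2_fix (s : F -> F) (s0 : s 0 = 0) (sD : forall x y, s (x + y) = s x + s y)
  (sM : forall x y, s (x * y) = s x * s y) (P0 P1 : M) :
  (map_mx s P0)^T = - (Bi *m P0 *m B) -> (map_mx s P1)^T = - (Bi *m P1 *m B) ->
  s (\tr (P0 *m P1)) = \tr (P0 *m P1).
Proof.
move=> h0 h1.
rewrite (map_tr s0 sD) (map_mulmx s0 sD sM) -mxtrace_tr trmx_mul h0 h1.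
by rewrite mulNmx mulmxN opprK conjM tr_conj mxtrace_mulC.
Qed.

Lemma tr3_anti (P0 P1 P2 : M) :
  P0^T = - (Bi *m P0 *m B) -> P1^T = - (Bi *m P1 *m B) -> P2^T = - (Bi *m P2 *m B) ->
  \tr (P1 *m P0 *m P2) = - \tr (P0 *m P1 *m P2).
Proof.
move=> h0 h1 h2.
rewrite -mxtrace_tr !trmx_mul h0 h1 h2.
rewrite !mulNmx !mulmxN !opprK conjM conjM raddfN /= tr_conj.
by rewrite mxtrace_mulC.
Qed.
End Tr.

Lemma cardF_gt1 (F : finFieldType) : (1 < #|[set: F]|)%N.
Proof. by rewrite cardsT (cardD1 0) (cardD1 1) !inE oner_eq0. Qed.

Lemma card_fix (F : finFieldType) (q0 : nat) : (1 < q0)%N ->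
  (#|[set x : F | x ^+ q0 == x]| <= q0)%N.
Proof.
move=> hq.
pose p : {poly F} := 'X^q0 - 'X.
have sp : size p = q0.+1.
  by rewrite /p size_polyDl ?size_polyXn // size_polyN size_polyX ltnS.
have pn0 : p != 0 by rewrite -size_poly_eq0 sp.
have := max_poly_roots pn0 (rs := enum [set x : F | x ^+ q0 == x]).
rewrite sp ltnS cardE; apply.
- by apply/allP=> x; rewrite mem_enum inE /root /p !hornerE subr_eq0.
- exact: enum_uniq.
Qed.



Lemma tv_rel (F : finFieldType) (n : nat) (s : F -> F) (s0 : s 0 = 0) (s1 : s 1 = 1)
  (sD : forall x y, s (x + y) = s x + s y) (B r : 'M[F]_n) :
  B \in unitmx -> is_transvection r -> r *m B *m (map_mx s r)^T = B ->
  (map_mx s (tv_f r *m tv_u r))^T = - (invmx B *m (tv_f r *m tv_u r) *m B).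
Proof.
move=> Bu /tvP[_ _ h0 hr] hs.
apply: (adj_rel s0 s1 sD Bu); last by rewrite -hr.
by rewrite rank1M h0 scale0r.
Qed.

Lemma unitary_part (F : finFieldType) (q0 n : nat) (H : 'M[F]_n) (X : {set 'M[F]_n}) :
     #|[set: F]| = (q0 ^ 2)%N -> odd #|[set: F]| -> (4 <= n)%N ->
     is_hermitian q0 H -> \det H != 0 ->
     lemma_hyps (SU_set q0 H) X ->
     Lk 3 X = [set: F] -> index_le2 (Lk 2 X) ->
     Lk 2 X = [set x : F | x ^+ q0 == x].
Proof.
move=> hq oddF _ _ dH [hX _ _ _ _] _ [d [hd hc]].
have q0gt1 : (1 < q0)%N.
  have := cardF_gt1 F; rewrite hq.
  by case: (q0) => [|[|q]].
pose s := frobq q0 (F := F).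
have s0 : s 0 = 0 by rewrite /s /frobq expr0n; case: (q0) q0gt1.
have s1 : s 1 = 1 by rewrite /s /frobq expr1n.
have sD : forall x y, s (x + y) = s x + s y by move=> x y; exact: frob_additive hq x y.
have sM : forall x y, s (x * y) = s x * s y by move=> x y; rewrite /s /frobq exprMn.
have Hu : H \in unitmx by rewrite unitmxE unitfE.
pose S0 := [set x : F | x ^+ q0 == x].
have S0c : subfield_closed S0.
  apply: sfI; rewrite ?inE.
  - by rewrite -[_ ^+ _]/(s 0) s0.
  - by rewrite expr1n.
  - by move=> x y; rewrite !inE => /eqP hx /eqP hy; rewrite -[_ ^+ _]/(s _) sD /s /frobq hx hy.
  - by move=> x y; rewrite !inE => /eqP hx /eqP hy; rewrite exprMn hx hy.
  - by move=> x; rewrite !inE => /eqP hx; rewrite -[_ ^+ _]/(s _) (sN s0 sD) /s /frobq hx.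
  - by move=> x; rewrite !inE => /eqP hx; rewrite exprVn hx.
have relX : forall r, r \in X -> is_transvection r /\
    (map_mx s (tv_f r *m tv_u r))^T = - (invmx H *m (tv_f r *m tv_u r) *m H).
  move=> r rX; move: (subsetP hX r rX); rewrite !inE => /andP[/andP[/eqP hr _] tr].
  by split=> //; apply: tv_rel.
have LS : Lk 2 X \subset S0.
  apply: gen_min S0c _; apply/subsetP=> w; rewrite inE => /asboolP[m [hm [r [m0 allr nz ->]]]].
  case: m r hm m0 allr nz => [|[|[|m]]] r //= _ _ allr nz.
  - have r0X : tnth r ord0 \in X by apply: (allP allr); apply: mem_tnth.
    have [t1 _] := relX _ r0X.
    by case/tvP: t1 => _ _ h0 _; move: nz; rewrite cweight1 h0 eqxx.
  - have r0X : tnth r ord0 \in X by apply: (allP allr); apply: mem_tnth.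
    have r1X : tnth r (inord 1) \in X by apply: (allP allr); apply: mem_tnth.
    have [_ h0] := relX _ r0X; have [_ h1] := relX _ r1X.
    rewrite inE cweight2 w2; apply/eqP.
    exact: (tr2_fix Hu s0 sD sM h0 h1).
apply/eqP; rewrite eqEcard LS /=.
have cS0 := card_fix F q0gt1.
have cL : #|Lk 2 X| = q0.
  have le : (#|Lk 2 X| <= q0)%N := leq_trans (subset_leq_card LS) cS0.
  move: hc; rewrite hq.
  case: d hd => [|[|[|d]]] //= _.
  - rewrite expn0 => e; have : (1 ^ 2 < q0 ^ 2)%N by rewrite ltn_exp2r.
    by rewrite e.
  - rewrite expn1 => e; move: le; rewrite -e.
    by case: (q0) q0gt1 => [|[|q]] // _; rewrite leqNgt !expnS expn0 muln1 ltn_Pmull.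
  - by move/eqP; rewrite eqn_exp2r // => /eqP.
by rewrite cL.
Qed.



Lemma tnth2_1 (T : Type) (a b : T) : tnth [tuple a; b] (inord 1) = b.
Proof. by rewrite (tnth_nth a) /= inordK. Qed.

Lemma cw2 (F : finFieldType) (n : nat) (a b : 'M[F]_n) :
  cweight [tuple a; b] = pv (tv_u a) (tv_f b) * pv (tv_u b) (tv_f a).
Proof. by rewrite cweight2 tnth2_1. Qed.

Lemma w2inK (F : finFieldType) (n : nat) (X : {set 'M[F]_n}) a b :
  a \in X -> b \in X -> pv (tv_u a) (tv_f b) * pv (tv_u b) (tv_f a) \in Lk 2 X.
Proof.
move=> aX bX.
have [->|nz] := eqVneq (pv (tv_u a) (tv_f b) * pv (tv_u b) (tv_f a)) 0.
  exact: sf0 (gen_closed _).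
apply: (subsetP (gen_sub _)); rewrite inE; apply/asboolP; exists 2%N; split=> //.
exists [tuple a; b]; split=> //; first by rewrite /= aX bX.
- by rewrite cw2.
- by rewrite cw2.
Qed.



Lemma sp_part (F : finFieldType) (n : nat) (B : 'M[F]_n) (X : {set 'M[F]_n}) :
     odd #|[set: F]| -> (4 <= n)%N ->
     is_alternating B -> \det B != 0 ->
     lemma_hyps (Sp_set B) X ->
     Lk 3 X = [set: F] -> index_le2 (Lk 2 X) ->
     Lk 2 (Xk 3 X) = [set: F].
Proof.
move=> oddF _ _ dB [hX _ _ _ _] h3 [d [hd hc]].
have Bu : B \in unitmx by rewrite unitmxE unitfE.
pose Bi := invmx B.
have relX : forall r, r \in X -> is_transvection r /\
    (tv_f r *m tv_u r)^T = - (Bi *m (tv_f r *m tv_u r) *m B).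
  move=> r rX; move: (subsetP hX r rX); rewrite !inE => /andP[/eqP hr tr].
  split=> //.
  have := @tv_rel F n id erefl erefl (fun x y => erefl) B r Bu tr.
  by rewrite !map_mx_id // => /(_ hr).
have XXk : X \subset Xk 3 X.
  apply/subsetP=> r rX; rewrite inE (proj1 (relX r rX)) /=; apply/asboolP.
  exists [:: r]; split=> //; split; first by rewrite /= rX.
  by rewrite /= mulmx1.
pose K := Lk 2 X; pose L := Lk 2 (Xk 3 X).
have KL : K \subset L.
  apply: gen_mono; apply/subsetP=> w; rewrite !inE => /asboolP[m [hm [r [m0 allr nz ->]]]].
  apply/asboolP; exists m; split=> //; exists r; split=> //.
  by apply: sub_all allr => y /=; apply: (subsetP XXk).
have [KT|KnT] := eqVneq K [set: F].
  by apply/eqP; rewrite eqEsubset subsetT /= -KT.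
have Kc : subfield_closed K := gen_closed _.
have Lc : subfield_closed L := gen_closed _.
have hc2 : #|[set: F]| = (#|K| ^ 2)%N.
  case: d hd hc => [|[|[|d]]] //= _.
  - by move=> e; have := cardF_gt1 F; rewrite e.
  - rewrite expn1 => e; case/eqP: KnT; apply/eqP; by rewrite eqEcard subsetT /= e.
have [w [wK [r [allr nz ew]]]] : exists w, w \notin K /\ exists r : 3.-tuple 'M[F]_n,
    [/\ all (mem X) r, cweight r != 0 & w = cweight r].
  match goal with |- ?G => have [//|hall] := pselect G end.
  exfalso; case/eqP: KnT; apply/eqP; rewrite eqEsubset subsetT /= -h3.
  apply: gen_min Kc _; apply/subsetP=> w; rewrite inE => /asboolP[m [hm [r [m0 allr nz ew]]]].
  case: (leqP m 2) => hm2.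
    apply: (subsetP (gen_sub _)); rewrite inE; apply/asboolP; exists m; split=> //.
    by exists r.
  have m3 : m = 3%N by apply/eqP; rewrite eqn_leq hm hm2.
  subst m; apply/negPn/negP => wK; apply: hall; exists w; split=> //; by exists r.

have r0X : tnth r ord0 \in X by apply: (allP allr); apply: mem_tnth.
have r1X : tnth r (inord 1) \in X by apply: (allP allr); apply: mem_tnth.
have r2X : tnth r (inord 2) \in X by apply: (allP allr); apply: mem_tnth.
move: ew; rewrite cweight3.
set r0 := tnth r ord0 in r0X *; set r1 := tnth r (inord 1) in r1X *;
  set r2 := tnth r (inord 2) in r2X * => ew.
have k01 := w2inK r0X r1X; have k02 := w2inK r0X r2X; have k12 := w2inK r1X r2X.
have [tr0 T0] := relX _ r0X; have [tr1 T1] := relX _ r1X; have [tr2 T2] := relX _ r2X.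
have anti := tr3_anti Bu T0 T1 T2.
rewrite -!w3 in anti.
case/tvP: tr0 => u0n f0n h00 e0; case/tvP: tr1 => u1n f1n h11 e1.
set u0 := tv_u r0 in u0n h00 e0 T0 anti k01 k02 ew *.
set f0 := tv_f r0 in f0n h00 e0 T0 anti k01 k02 ew *.
set u1 := tv_u r1 in u1n h11 e1 T1 anti k01 k12 ew *.
set f1 := tv_f r1 in f1n h11 e1 T1 anti k01 k12 ew *.
set u2 := tv_u r2 in T2 anti k02 k12 ew *.
set f2 := tv_f r2 in T2 anti k02 k12 ew *.
pose P0 := f0 *m u0.
have PP0 : P0 *m P0 = 0 by rewrite /P0 rank1M h00 scale0r.
have inv0 : r0 *m (1%:M - P0) = 1%:M.
  by rewrite e0 -/P0 mulmxDl mul1mx mulmxBr mulmx1 PP0 subr0 subrK.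
have inv0' : (1%:M - P0) *m r0 = 1%:M.
  by rewrite e0 -/P0 mulmxBl mul1mx mulmxDr mulmx1 PP0 addr0 addrK.
have r0u : r0 \in unitmx by case: (mulmx1_unit inv0).
have iv : invmx r0 = 1%:M - P0.
  by have := mulKmx r0u (1%:M - P0); rewrite inv0 mulmx1.
pose t := invmx r0 *m (r1 *m (r0 *m 1%:M)).
pose ut := u1 *m r0; pose ft := (1%:M - P0) *m f1.
have te : t = 1%:M + ft *m ut.
  rewrite /t mulmx1 iv e1 mulmxDl mul1mx mulmxDr inv0' /ft /ut !mulmxA.
  by [].
have trt : is_transvection t.
  apply/existsP; exists (ut, ft); rewrite /tv_data /= te eqxx andbT.
  apply/and3P; split.
  - apply/eqP=> h; move/eqP: u1n; apply.
    by rewrite -[u1]mulmx1 -inv0 mulmxA -/ut h mul0mx.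
  - apply/eqP=> h; move/eqP: f1n; apply.
    by rewrite -[f1]mul1mx -inv0 -mulmxA -/ft h mulmx0.
  - by rewrite /ut /ft pvMl mulmxA inv0 mul1mx h11.
have tXk : t \in Xk 3 X.
  rewrite inE trt /=; apply/asboolP; exists [:: invmx r0; r1; r0]; split=> //; split=> //.
  apply/and4P; split=> //; apply/orP; [right; exact: imset_f|left; exact: r1X|left; exact: r0X].
pose x := cweight [tuple t; r2].
have xe : x = (pv u1 f2 + pv u1 f0 * pv u0 f2) * (pv u2 f1 - pv u2 f0 * pv u0 f1).
  rewrite /x cw2 w2.
  case/tvP: trt => _ _ _ et; move: (etrans (esym et) te); move/addrI => ->.
  rewrite -w2 /ut /ft pvMl e0 mulmxDl mul1mx pvDr pvR; congr (_ * _).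
  by rewrite mulmxBl mul1mx pvDr pvNr /P0 pvR.
have xk : x = (pv u1 f2 * pv u2 f1 - (pv u0 f1 * pv u1 f0) * (pv u0 f2 * pv u2 f0)) - 2%:R * w.
  rewrite xe ew.
  transitivity (pv u1 f2 * pv u2 f1 - pv u1 f2 * pv u2 f0 * pv u0 f1
     + pv u1 f0 * pv u0 f2 * pv u2 f1 - pv u1 f0 * pv u0 f2 * pv u2 f0 * pv u0 f1); first by ring.
  rewrite anti; ring.
have two := two_neq0 oddF.
have xK : x \notin K.
  apply/negP=> xK; move/negP: wK; apply.
  have -> : w = ((pv u1 f2 * pv u2 f1 - (pv u0 f1 * pv u1 f0) * (pv u0 f2 * pv u2 f0)) - x)
        * (2%:R)^-1.
    by rewrite xk; field.
  apply: (sfM Kc); last by apply: (sfV Kc); rewrite mulr2n; apply: (sfA Kc); apply: (sf1 Kc).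
  apply: (sfA Kc); last by apply: (sfN Kc).
  apply: (sfA Kc); first exact: k12.
  by apply: (sfN Kc); apply: (sfM Kc).
have xL : x \in L.
  apply: (subsetP (gen_sub _)); rewrite inE; apply/asboolP; exists 2%N; split=> //.
  exists [tuple t; r2]; split=> //.
  - by rewrite /= tXk (subsetP XXk _ r2X).
  - by apply: contraNneq xK => x0; rewrite /x x0 (sf0 Kc).
exact: (index2_full Kc Lc KL xL xK hc2).
Qed.

Theorem lemma4p5 :
  (* symplectic case *)
  (forall (F : finFieldType) (n : nat) (B : 'M[F]_n) (X : {set 'M[F]_n}),
     odd #|[set: F]| -> (4 <= n)%N ->
     is_alternating B -> \det B != 0 ->
     lemma_hyps (Sp_set B) X ->
     Lk 3 X = [set: F] -> index_le2 (Lk 2 X) ->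
     Lk 2 (Xk 3 X) = [set: F])
  /\
  (* unitary case, q = q0^2 *)
  (forall (F : finFieldType) (q0 n : nat) (H : 'M[F]_n) (X : {set 'M[F]_n}),
     #|[set: F]| = (q0 ^ 2)%N -> odd #|[set: F]| -> (4 <= n)%N ->
     is_hermitian q0 H -> \det H != 0 ->
     lemma_hyps (SU_set q0 H) X ->
     Lk 3 X = [set: F] -> index_le2 (Lk 2 X) ->
     Lk 2 X = [set x : F | x ^+ q0 == x]).
Proof.
split.
- exact: sp_part.
- exact: unitary_part.
Qed.
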